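(* If $t$ is an $l$-term with $t\to_s^* F_1$, then there exists an $s$-reduction from $t$ to $F_1$ in which no contracted redex occurs inside a tuple (i.e. no contracted redex occurrence lies within a component of a tuple subterm of the term being contracted).
   Context: $i$-terms (unlabelled terms) are built from variables and the constants $C,T,F,K,S$ by binary application (left-associative). $\mathrm{CLC}$ is the conditional system with rules $C\,T\,x\,y\to x$; $C\,F\,x\,y\to y$; $C\,z\,x\,y\to x \Leftarrow x=y$; $K\,x\,y\to x$; $S\,x\,y\,z\to x\,z\,(y\,z)$, where $=$ is convertibility in $\mathrm{CLC}$ itself (defined by levels: $R_0$ with empty condition, $R_{n+1}$ with $=$ the conversion of $\to_{R_n}$, $\to_{\mathrm{CLC}}=\bigcup_n\to_{R_n}$); $=_{\mathrm{CLC}}$ is conversion in $\mathrm{CLC}$. Labelled constants: $C_1,C_2,T_1,F_1,K_1$ and $S^{n_0,\dots,n_k}$ for all $k\ge1$, $n_0,\dots,n_k\ge1$. $l$-terms: every $i$-term; every labelled constant; $t_1t_2$ for $l$-terms $t_1,t_2$; and $\langle t_1,\dots,t_n\rangle$ for $l$-terms $t_1,\dots,t_n$ with $n\ge2$ (a tuple of size $n$). Convention: $\langle t\rangle\equiv t$ (not a tuple). Erasures: an $i$-term is an erasure of itself; $C$ is an erasure of $C_1,C_2$; $T$ of $T_1$; $F$ of $F_1$; $K$ of $K_1$; $S$ of each $S^{n_0,\dots,n_k}$; if $q_1,q_2$ are erasures of $t_1,t_2$ then $q_1q_2$ is an erasure of $t_1t_2$; if $q_i$ is an erasure of $t_i$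 for some $i$ then $q_i$ is an erasure of $\langle t_1,\dots,t_n\rangle$. The leftmost erasure $\lfloor t\rfloor$ always chooses $i=1$ for tuples. $\mathrm{CLC}_s$ is the rewriting system on $l$-terms (variables instantiated by arbitrary $l$-terms, contraction allowed in any context, including inside tuple components) with rules: $C_1T_1xy\to x$; $C_1F_1xy\to y$; $C_2zxy\to x\Leftarrow\lfloor x\rfloor=_{\mathrm{CLC}}\lfloor y\rfloor$; $C_2Txy\to x$; $C_2Fxy\to y$; $C_2T_1xy\to x$; $C_2F_1xy\to y$; $K_1xy\to x$; and, for each $S^{n_0,\dots,n_k}$, $S^{n_0,\dots,n_k}\,x\,\langle y_1,\dots,y_k\rangle\,\langle z_{0,1},\dots,z_{0,n_0},z_{1,1},\dots,z_{1,n_1},\dots,z_{k,1},\dots,z_{k,n_k}\rangle \to x\,\langle z_{0,1},\dots,z_{0,n_0}\rangle\,\langle y_1\langle z_{1,1},\dots,z_{1,n_1}\rangle,\dots,y_k\langle z_{k,1},\dots,z_{k,n_k}\rangle\rangle$ under the condition that $\lfloor z_{i,j}\rfloor=_{\mathrm{CLC}}\lfloor z_{i',j'}\rfloor$ for all index pairs and $\lfloor y_i\rfloor=_{\mathrm{CLC}}\lfloor y_j\rfloor$ for all $i,j$. One-step contraction in $\mathrm{CLC}_s$ is written $\to_s$ and $\to_s^*$ is its reflexive–transitive closure ($s$-reduction). *)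

(* Defs.v *)
From Stdlib Require Import List PArith Relations.
Import ListNotations.

Inductive iterm : Type :=
| IVar (n : nat)
| IC | IT | IF | IK | IS
| IApp (a b : iterm).

(** Root rules of CLC, with the condition of the rule C z x y -> x
    interpreted by the relation [E]. *)
Inductive clc_root (E : iterm -> iterm -> Prop) : iterm -> iterm -> Prop :=
| clc_CT : forall x y, clc_root E (IApp (IApp (IApp IC IT) x) y) x
| clc_CF : forall x y, clc_root E (IApp (IApp (IApp IC IF) x) y) y
| clc_Cz : forall z x y, E x y -> clc_root E (IApp (IApp (IApp IC z) x) y) x
| clc_K  : forall x y, clc_root E (IApp (IApp IK x) y) x
| clc_S  : forall x y z,
    clc_root E (IApp (IApp (IApp IS x) y) z) (IApp (IApp x z) (IApp y z)).

Inductive clc_ctx (E : iterm -> iterm -> Prop) : iterm -> iterm -> Prop :=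
| clc_ctx_root : forall a b, clc_root E a b -> clc_ctx E a b
| clc_ctx_l : forall a a' b, clc_ctx E a a' -> clc_ctx E (IApp a b) (IApp a' b)
| clc_ctx_r : forall a b b', clc_ctx E b b' -> clc_ctx E (IApp a b) (IApp a b').

Fixpoint clc_level (n : nat) : iterm -> iterm -> Prop :=
  match n with
  | O => clc_ctx (fun _ _ => False)
  | S m => clc_ctx (clos_refl_sym_trans iterm (clc_level m))
  end.

Definition clc_step (a b : iterm) : Prop := exists n, clc_level n a b.

Definition clc_conv : iterm -> iterm -> Prop := clos_refl_sym_trans iterm clc_step.

(** [LSl n0 n1 ns] is S^{n0,n1,...,nk} with ns = [n2;...;nk] (so k = 1 + length ns);
    labels are positive.  [LTup t1 t2 ts] is the tuple <t1,t2,ts...> of size >= 2. *)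
Inductive lterm : Type :=
| LVar (n : nat)
| LC | LT | LF | LK | LS
| LC1 | LC2 | LT1 | LF1 | LK1
| LSl (n0 n1 : positive) (ns : list positive)
| LApp (a b : lterm)
| LTup (t1 t2 : lterm) (ts : list lterm).

Fixpoint lfloor (t : lterm) : iterm :=
  match t with
  | LVar n => IVar n
  | LC | LC1 | LC2 => IC
  | LT | LT1 => IT
  | LF | LF1 => IF
  | LK | LK1 => IK
  | LS | LSl _ _ _ => IS
  | LApp a b => IApp (lfloor a) (lfloor b)
  | LTup t1 _ _ => lfloor t1
  end.

(** <t1,...,tn>, with the convention <t> = t (only used on nonempty lists). *)
Definition mk_tuple (l : list lterm) : lterm :=
  match l with
  | [] => LVar 0
  | [t] => t
  | t1 :: t2 :: ts => LTup t1 t2 ts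
  end.

Definition app3 (f a b c : lterm) : lterm := LApp (LApp (LApp f a) b) c.

Definition lconv (u v : lterm) : Prop := clc_conv (lfloor u) (lfloor v).

Inductive s_root : lterm -> lterm -> Prop :=
| s_C1T1 : forall x y, s_root (app3 LC1 LT1 x y) x
| s_C1F1 : forall x y, s_root (app3 LC1 LF1 x y) y
| s_C2z  : forall z x y, lconv x y -> s_root (app3 LC2 z x y) x
| s_C2T  : forall x y, s_root (app3 LC2 LT x y) x
| s_C2F  : forall x y, s_root (app3 LC2 LF x y) y
| s_C2T1 : forall x y, s_root (app3 LC2 LT1 x y) x
| s_C2F1 : forall x y, s_root (app3 LC2 LF1 x y) y
| s_K1   : forall x y, s_root (LApp (LApp LK1 x) y) x
| s_S : forall (n0 n1 : positive) (ns : list positive) (x : lterm)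
          (ys : list lterm) (z0 : list lterm) (zss : list (list lterm)),
    length ys = S (length ns) ->
    map (@length lterm) (z0 :: zss) = map Pos.to_nat (n0 :: n1 :: ns) ->
    (forall z z', In z (z0 ++ concat zss) -> In z' (z0 ++ concat zss) -> lconv z z') ->
    (forall y y', In y ys -> In y' ys -> lconv y y') ->
    s_root (app3 (LSl n0 n1 ns) x (mk_tuple ys) (mk_tuple (z0 ++ concat zss)))
           (LApp (LApp x (mk_tuple z0))
                 (mk_tuple (map (fun p => LApp (fst p) (mk_tuple (snd p)))
                                (combine ys zss)))).

Inductive s_step : lterm -> lterm -> Prop :=
| s_step_root : forall a b, s_root a b -> s_step a b
| s_step_appl : forall a a' b, s_step a a' -> s_step (LApp a b) (LApp a' b)
| s_step_appr : forall a b b', s_step b b' -> s_step (LApp a b) (LApp a b')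
| s_step_tup1 : forall t1 t1' t2 ts, s_step t1 t1' -> s_step (LTup t1 t2 ts) (LTup t1' t2 ts)
| s_step_tup2 : forall t1 t2 t2' ts, s_step t2 t2' -> s_step (LTup t1 t2 ts) (LTup t1 t2' ts)
| s_step_tupr : forall t1 t2 l1 u u' l2, s_step u u' ->
    s_step (LTup t1 t2 (l1 ++ u :: l2)) (LTup t1 t2 (l1 ++ u' :: l2)).

(** One-step s-contraction of a redex not lying inside any tuple component:
    the redex position is reached through application nodes only. *)
Inductive s_step_out : lterm -> lterm -> Prop :=
| s_out_root : forall a b, s_root a b -> s_step_out a b
| s_out_appl : forall a a' b, s_step_out a a' -> s_step_out (LApp a b) (LApp a' b)
| s_out_appr : forall a b b', s_step_out b b' -> s_step_out (LApp a b) (LApp a b').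

Definition s_red : lterm -> lterm -> Prop := clos_refl_trans lterm s_step.
Definition s_red_out : lterm -> lterm -> Prop := clos_refl_trans lterm s_step_out.

(* Main.v *)
Require Import Defs.
From Stdlib Require Import List PArith Relations Lia Wf_nat.
Import ListNotations.

Lemma root_mono (E E' : iterm -> iterm -> Prop) : (forall x y, E x y -> E' x y) ->
  forall a b, clc_root E a b -> clc_root E' a b.
Proof. intros H a b r; destruct r; constructor; auto. Qed.

Lemma ctx_mono (E E' : iterm -> iterm -> Prop) : (forall x y, E x y -> E' x y) ->
  forall a b, clc_ctx E a b -> clc_ctx E' a b.
Proof.
  intros H a b r; induction r.
  - apply clc_ctx_root; eapply root_mono; eauto.
  - apply clc_ctx_l; auto.
  - apply clc_ctx_r; auto.
Qed.

Lemma rst_mono (R R' : iterm -> iterm -> Prop) : (forall x y, R x y -> R' x y) ->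
  forall a b, clos_refl_sym_trans _ R a b -> clos_refl_sym_trans _ R' a b.
Proof.
  intros H a b r; induction r.
  - apply rst_step; auto.
  - apply rst_refl.
  - apply rst_sym; auto.
  - eapply rst_trans; eauto.
Qed.

Lemma level_S n : forall a b, clc_level n a b -> clc_level (S n) a b.
Proof.
  induction n; intros a b H.
  - simpl in *. eapply ctx_mono; [|exact H]. intros x y [].
  - simpl in *. eapply ctx_mono; [|exact H]. apply rst_mono. exact IHn.
Qed.

Lemma level_le n m : n <= m -> forall a b, clc_level n a b -> clc_level m a b.
Proof. induction 1; auto. intros; apply level_S; auto. Qed.

Lemma conv_level a b : clc_conv a b -> exists n, clos_refl_sym_trans _ (clc_level n) a b.
Proof.
  induction 1.
  - destruct H as [n H]. exists n. apply rst_step; auto.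
  - exists 0. apply rst_refl.
  - destruct IHclos_refl_sym_trans as [n H1]. exists n. apply rst_sym; auto.
  - destruct IHclos_refl_sym_trans1 as [n1 H1].
    destruct IHclos_refl_sym_trans2 as [n2 H2].
    exists (Nat.max n1 n2). eapply rst_trans.
    + eapply rst_mono; [|exact H1]. apply level_le; lia.
    + eapply rst_mono; [|exact H2]. apply level_le; lia.
Qed.

Lemma conv_app_r c a b : clc_conv a b -> clc_conv (IApp c a) (IApp c b).
Proof.
  induction 1.
  - destruct H as [n H]. apply rst_step. exists n.
    destruct n; simpl in *; apply clc_ctx_r; auto.
  - apply rst_refl.
  - apply rst_sym; auto.
  - eapply rst_trans; eauto.
Qed.

Lemma conv_app_l c a b : clc_conv a b -> clc_conv (IApp a c) (IApp b c).
Proof.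
  induction 1.
  - destruct H as [n H]. apply rst_step. exists n.
    destruct n; simpl in *; apply clc_ctx_l; auto.
  - apply rst_refl.
  - apply rst_sym; auto.
  - eapply rst_trans; eauto.
Qed.

Lemma conv0 a b : clc_root (fun _ _ => False) a b -> clc_conv a b.
Proof. intros H. apply rst_step. exists 0. simpl. apply clc_ctx_root; auto. Qed.

Lemma lfloor_mk a l : lfloor (mk_tuple (a :: l)) = lfloor a.
Proof. destruct l; reflexivity. Qed.

Lemma lconv_refl a : lconv a a.
Proof. apply rst_refl. Qed.
Lemma lconv_sym a b : lconv a b -> lconv b a.
Proof. apply rst_sym. Qed.
Lemma lconv_trans a b c : lconv a b -> lconv b c -> lconv a c.
Proof. apply rst_trans. Qed.

Lemma length_pos_ne (l : list lterm) p : length l = Pos.to_nat p -> exists a l', l = a :: l'.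
Proof. destruct l; simpl; intros H. - pose proof (Pos2Nat.is_pos p); lia. - eauto. Qed.

Lemma root_lconv a b : s_root a b -> lconv a b.
Proof.
  unfold lconv. destruct 1; unfold app3.
  1-8: simpl.
  - apply conv0; constructor.
  - apply conv0; constructor.
  - apply conv_level in H as [n Hn]. apply rst_step. exists (S n). simpl.
    apply clc_ctx_root. apply clc_Cz. auto.
  - apply conv0; constructor.
  - apply conv0; constructor.
  - apply conv0; constructor.
  - apply conv0; constructor.
  - apply conv0; constructor.
  - simpl in H0. injection H0 as Hz0 Hzss.
    destruct (length_pos_ne _ _ Hz0) as [zh [z0' ->]].
    destruct ys as [|y ys']; [simpl in H; discriminate|].
    destruct zss as [|zs1 zss']; [simpl in Hzss; discriminate|].
    simpl in Hzss. injection Hzss as Hzs1 _.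
    destruct (length_pos_ne _ _ Hzs1) as [zh1 [zs1' ->]].
    cbn [combine map app fst snd]. cbn [lfloor]. rewrite !lfloor_mk. cbn [lfloor].
    rewrite lfloor_mk.
    eapply rst_trans. { apply conv0. apply clc_S. }
    apply conv_app_r. apply conv_app_r. apply H1; simpl; auto.
    right. apply in_or_app. right. simpl. auto.
Qed.

Definition onestep (l l' : list lterm) : Prop :=
  exists l1 u u' l2, l = l1 ++ u :: l2 /\ l' = l1 ++ u' :: l2 /\ s_step u u'.

Lemma onestep_mk l l' : onestep l l' -> s_step (mk_tuple l) (mk_tuple l').
Proof.
  intros [l1 [u [u' [l2 [-> [-> H]]]]]].
  destruct l1 as [|a [|b r]].
  - destruct l2; simpl; [auto|]. apply s_step_tup1; auto.
  - simpl. apply s_step_tup2; auto.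
  - simpl. apply s_step_tupr; auto.
Qed.

Lemma step_lconv a b : s_step a b -> lconv a b.
Proof.
  induction 1.
  - apply root_lconv; auto.
  - apply conv_app_l; auto.
  - apply conv_app_r; auto.
  - exact IHs_step.
  - unfold lconv; simpl; apply rst_refl.
  - unfold lconv; simpl; apply rst_refl.
Qed.

Lemma onestep_length l l' : onestep l l' -> length l = length l'.
Proof. intros [l1 [u [u' [l2 [-> [-> H]]]]]]. rewrite !length_app; reflexivity. Qed.

Lemma onestep_lconv_back l l' : onestep l l' ->
  (forall a b, In a l' -> In b l' -> lconv a b) ->
  (forall a b, In a l -> In b l -> lconv a b).
Proof.
  intros [l1 [u [u' [l2 [-> [-> H]]]]]] Hc.
  assert (Hm : forall a, In a (l1 ++ u :: l2) -> exists a', In a' (l1 ++ u' :: l2) /\ lconv a a').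
  { intros a Ha. apply in_app_or in Ha as [Ha|[Ha|Ha]].
    - exists a; split; [apply in_or_app; auto| apply lconv_refl].
    - subst. exists u'; split; [apply in_or_app; simpl; auto| apply step_lconv; auto].
    - exists a; split; [apply in_or_app; simpl; auto| apply lconv_refl]. }
  intros a b Ha Hb. destruct (Hm a Ha) as [a' [Ha' Ca]]. destruct (Hm b Hb) as [b' [Hb' Cb]].
  eapply lconv_trans; [exact Ca|]. eapply lconv_trans; [apply Hc; eauto|]. apply lconv_sym; auto.
Qed.

Lemma onestep_split c a b : onestep c (a ++ b) ->
  (exists a', onestep a' a /\ c = a' ++ b) \/ (exists b', onestep b' b /\ c = a ++ b').
Proof.
  intros [l1 [u [u' [l2 [-> [E H]]]]]].
  symmetry in E. apply app_eq_app in E as [l [[E1 E2]|[E1 E2]]].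
  - right. exists (l ++ u :: l2). split.
    + exists l, u, u', l2. auto.
    + subst. rewrite <- app_assoc. reflexivity.
  - destruct l as [|x l'].
    + simpl in E2. subst. rewrite app_nil_r. right. exists (u :: l2). split; auto.
      exists [], u, u', l2. auto.
    + simpl in E2. injection E2 as Ex El; subst x l2. left. exists (l1 ++ u :: l'). split.
      * exists l1, u, u', l'. auto.
      * subst. rewrite <- app_assoc. reflexivity.
Qed.

Lemma onestep_concat c zss : onestep c (concat zss) ->
  exists L1 zs zs' L2, zss = L1 ++ zs :: L2 /\ onestep zs' zs /\ c = concat (L1 ++ zs' :: L2).
Proof.
  revert c; induction zss as [|zs rest IH]; intros c H.
  - destruct H as [l1 [u [u' [l2 [_ [E _]]]]]]. simpl in E. destruct l1; discriminate.
  - simpl in H. apply onestep_split in H as [[a' [H ->]]|[b' [H ->]]].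
    + exists [], zs, a', rest. auto.
    + destruct (IH _ H) as [L1 [z [z' [L2 [-> [Hz ->]]]]]].
      exists (zs :: L1), z, z', L2. simpl. auto.
Qed.

Lemma split_at {A} (l : list A) n : n < length l -> exists l1 x l2, l = l1 ++ x :: l2 /\ length l1 = n.
Proof.
  revert n; induction l as [|a l IH]; intros n H; simpl in H; [lia|].
  destruct n.
  - exists [], a, l. auto.
  - destruct (IH n) as [l1 [x [l2 [-> E]]]]; [lia|]. exists (a :: l1), x, l2. simpl. auto.
Qed.

Lemma combine_app2 {A B} (a b : list A) (c d : list B) :
  length a = length c -> combine (a ++ b) (c ++ d) = combine a c ++ combine b d.
Proof.
  revert c; induction a; intros [|x c] H; simpl in *; try discriminate; auto.
  f_equal. auto.
Qed.

Inductive s_step_in : lterm -> lterm -> Prop :=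
| in_appl : forall a a' b, s_step_in a a' -> s_step_in (LApp a b) (LApp a' b)
| in_appr : forall a b b', s_step_in b b' -> s_step_in (LApp a b) (LApp a b')
| in_tup : forall t1 t2 ts t1' t2' ts', onestep (t1 :: t2 :: ts) (t1' :: t2' :: ts') ->
    s_step_in (LTup t1 t2 ts) (LTup t1' t2' ts').

Lemma in_step a b : s_step_in a b -> s_step a b.
Proof.
  induction 1.
  - apply s_step_appl; auto.
  - apply s_step_appr; auto.
  - exact (onestep_mk _ _ H).
Qed.

Lemma out_step a b : s_step_out a b -> s_step a b.
Proof.
  induction 1.
  - apply s_step_root; auto.
  - apply s_step_appl; auto.
  - apply s_step_appr; auto.
Qed.

Lemma classify a b : s_step a b -> s_step_out a b \/ s_step_in a b.
Proof.
  induction 1.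
  - left; constructor; auto.
  - destruct IHs_step; [left; apply s_out_appl | right; apply in_appl]; auto.
  - destruct IHs_step; [left; apply s_out_appr | right; apply in_appr]; auto.
  - right. apply in_tup. exists [], t1, t1', (t2 :: ts). auto.
  - right. apply in_tup. exists [t1], t2, t2', ts. auto.
  - right. apply in_tup. exists (t1 :: t2 :: l1), u, u', l2. auto.
Qed.

Lemma inv_in_app t a b : s_step_in t (LApp a b) ->
  (exists a0, t = LApp a0 b /\ s_step_in a0 a) \/ (exists b0, t = LApp a b0 /\ s_step_in b0 b).
Proof. intros H; inversion H; subst; eauto. Qed.

Lemma inv_in_mk Y ys : s_step_in Y (mk_tuple ys) -> ys <> [] ->
  exists ys0, Y = mk_tuple ys0 /\ onestep ys0 ys.
Proof.
  intros H Hne. destruct ys as [|y1 [|y2 r]]; [congruence| |].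
  - exists [Y]. split; [reflexivity|]. exists [], Y, y1, []. split; auto. split; auto.
    apply in_step; auto.
  - simpl in H. inversion H; subst. exists (t1 :: t2 :: ts). auto.
Qed.

Ltac inv_app :=
  repeat match goal with
  | H : s_step_in _ (LApp _ _) |- _ =>
      let a0 := fresh "a0" in let Ha := fresh "Ha" in
      apply inv_in_app in H as [[a0 [-> Ha]]|[a0 [-> Ha]]]
  | H : s_step_in _ ?c |- _ => is_constructor c; inversion H
  end.

Lemma swap_root t t1 t2 : s_step_in t t1 -> s_root t1 t2 ->
  exists t', s_root t t' /\ (t' = t2 \/ s_step t' t2).
Proof.
  intros Hin Hr.
  destruct Hr as [x y|x y|z x y Hc|x y|x y|x y|x y|x y| n0 n1 ns x ys z0 zss Hy Hl Hz Hys];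
    unfold app3 in Hin.
  1-8: inv_app.
  all: try (inversion Ha; fail).
  1-17: eexists; split;
    [ first [ apply s_C1T1 | apply s_C1F1 | apply s_C2T | apply s_C2F | apply s_C2T1
            | apply s_C2F1 | apply s_K1
            | apply s_C2z; solve [ eauto
              | eapply lconv_trans; [apply step_lconv, in_step; eassumption | eauto]
              | eapply lconv_trans; [eauto | apply lconv_sym, step_lconv, in_step; eassumption]]]
    | first [left; reflexivity | right; apply in_step; eassumption] ].
  set (f := fun p : lterm * list lterm => LApp (fst p) (mk_tuple (snd p))).
  assert (Hlz : length zss = S (length ns)).
  { pose proof Hl as Hl'. simpl in Hl'. injection Hl' as _ Hl'.
    apply (f_equal (@length nat)) in Hl'.
    rewrite !length_map in Hl'. simpl in Hl'. rewrite length_map in Hl'. exact Hl'. }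
  assert (Hz0 : z0 <> []).
  { pose proof Hl as Hl'. simpl in Hl'. injection Hl' as Hl' _. intros ->. simpl in Hl'.
    pose proof (Pos2Nat.is_pos n0); lia. }

  apply inv_in_app in Hin as [[a0 [-> Ha]]|[a0 [-> Ha]]].
  - apply inv_in_app in Ha as [[a1 [-> Ha]]|[a1 [-> Ha]]].
    + apply inv_in_app in Ha as [[a2 [-> Ha]]|[a2 [-> Ha]]]; [inversion Ha|].
      exists (LApp (LApp a2 (mk_tuple z0)) (mk_tuple (map f (combine ys zss)))).
      split; [apply s_S; assumption|].
      right. apply s_step_appl, s_step_appl, in_step; auto.
    +
      apply inv_in_mk in Ha as [ys0 [-> Hos]];
        [|intros ->; simpl in Hy; discriminate].
      exists (LApp (LApp x (mk_tuple z0)) (mk_tuple (map f (combine ys0 zss)))).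
      split.
      { apply s_S; auto. rewrite (onestep_length _ _ Hos); auto.
        apply (onestep_lconv_back _ _ Hos); auto. }
      right. apply s_step_appr, onestep_mk.
      destruct Hos as [l1 [u [u' [l2 [E1 [E2 Hs]]]]]].
      destruct (split_at zss (length l1)) as [Z1 [zz [Z2 [EZ LZ]]]].
      { rewrite Hlz, <- Hy, E2, length_app. simpl. lia. }
      subst. rewrite !combine_app2 by auto. simpl. rewrite !map_app. simpl.
      exists (map f (combine l1 Z1)), (f (u, zz)), (f (u', zz)), (map f (combine l2 Z2)).
      split; [reflexivity|]. split; [reflexivity|]. unfold f; simpl.
      apply s_step_appl; auto.
  -
    apply inv_in_mk in Ha as [zs0 [-> Hos]];
      [|intros E; apply app_eq_nil in E as [E _]; auto].
    pose proof Hos as Hos'.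
    apply onestep_split in Hos' as [[z0' [Ho ->]]|[b' [Ho ->]]].
    + exists (LApp (LApp x (mk_tuple z0')) (mk_tuple (map f (combine ys zss)))).
      split.
      { apply s_S; auto.
        - simpl. rewrite (onestep_length _ _ Ho). exact Hl.
        - apply (onestep_lconv_back _ _ Hos); auto. }
      right. apply s_step_appl, s_step_appr, onestep_mk; auto.
    + apply onestep_concat in Ho as [L1 [zs [zs' [L2 [-> [Ho ->]]]]]].
      exists (LApp (LApp x (mk_tuple z0)) (mk_tuple (map f (combine ys (L1 ++ zs' :: L2))))).
      split.
      { apply s_S; auto.
        - rewrite <- Hl. simpl. rewrite !map_app. simpl. rewrite (onestep_length _ _ Ho). reflexivity.
        - apply (onestep_lconv_back _ _ Hos); auto. }
      right. apply s_step_appr, onestep_mk.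
      destruct (split_at ys (length L1)) as [Y1 [yy [Y2 [EY LY]]]].
      { rewrite Hy, <- Hlz, length_app. simpl. lia. }
      subst. rewrite !combine_app2 by auto. simpl. rewrite !map_app. simpl.
      exists (map f (combine Y1 L1)), (f (yy, zs')), (f (yy, zs)), (map f (combine Y2 L2)).
      split; [reflexivity|]. split; [reflexivity|]. unfold f; simpl.
      apply s_step_appr, onestep_mk; auto.
Qed.

Lemma swap t t1 t2 : s_step_in t t1 -> s_step_out t1 t2 ->
  exists t', s_step_out t t' /\ (t' = t2 \/ s_step t' t2).
Proof.
  intros Hin Ho. revert t Hin. induction Ho; intros t Hin.
  - destruct (swap_root _ _ _ Hin H) as [t' [Hr Ht]]. exists t'. split; auto.
    apply s_out_root; auto.
  - apply inv_in_app in Hin as [[a0 [-> Ha]]|[a0 [-> Ha]]].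
    + destruct (IHHo _ Ha) as [t' [Ho' [E|E]]].
      * exists (LApp t' b). split; [apply s_out_appl; auto|]. left; subst; auto.
      * exists (LApp t' b). split; [apply s_out_appl; auto|]. right; apply s_step_appl; auto.
    + exists (LApp a' a0). split; [apply s_out_appl; auto|]. right; apply s_step_appr, in_step; auto.
  - apply inv_in_app in Hin as [[a0 [-> Ha]]|[a0 [-> Ha]]].
    + exists (LApp a0 b'). split; [apply s_out_appr; auto|]. right; apply s_step_appl, in_step; auto.
    + destruct (IHHo _ Ha) as [t' [Ho' [E|E]]].
      * exists (LApp a t'). split; [apply s_out_appr; auto|]. left; subst; auto.
      * exists (LApp a t'). split; [apply s_out_appr; auto|]. right; apply s_step_appr; auto.
Qed.

Inductive redn : nat -> lterm -> lterm -> Prop :=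
| redn0 : forall t, redn 0 t t
| rednS : forall n t u v, s_step t u -> redn n u v -> redn (S n) t v.

Inductive outn : nat -> lterm -> lterm -> Prop :=
| outn0 : forall t, outn 0 t t
| outnS : forall n t u v, s_step_out t u -> outn n u v -> outn (S n) t v.

Lemma outn_redn n t u : outn n t u -> redn n t u.
Proof. induction 1; econstructor; eauto using out_step. Qed.

Lemma outn_red n t u : outn n t u -> s_red_out t u.
Proof.
  induction 1. - apply rt_refl. - eapply rt_trans; [apply rt_step; eauto| auto].
Qed.

Lemma red_redn t u : s_red t u -> exists n, redn n t u.
Proof.
  intros H. apply clos_rt_rt1n in H. induction H.
  - exists 0; constructor.
  - destruct IHclos_refl_trans_1n as [n Hn]. exists (S n). econstructor; eauto.
Qed.

Lemma main_n n : forall t, redn n t LF1 -> exists m, m <= n /\ outn m t LF1.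
Proof.
  induction n as [n IH] using (well_founded_induction lt_wf).
  intros t H. inversion H as [|k t0 u v Hs Hk]; subst.
  - exists 0. split; auto. constructor.
  - destruct (IH k ltac:(lia) u Hk) as [m [Hm Hu]].
    destruct (classify _ _ Hs) as [Ho|Hi].
    + exists (S m). split; [lia|]. econstructor; eauto.
    + inversion Hu as [|m' u0 w v0 Huw Hw]; subst.
      * inversion Hi.
      * destruct (swap _ _ _ Hi Huw) as [t' [Ht' [E|E]]].
        -- subst. exists (S m'). split; [lia|]. econstructor; eauto.
        -- assert (Hr : redn (S m') t' LF1) by (econstructor; eauto using outn_redn).
           destruct (IH (S m') ltac:(lia) t' Hr) as [m2 [Hm2 Ho2]].
           exists (S m2). split; [lia|]. econstructor; eauto.
Qed.

Theorem mainTheorem16 : forall t : lterm, s_red t LF1 -> s_red_out t LF1.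
Proof.
  intros t H. destruct (red_redn _ _ H) as [n Hn].
  destruct (main_n n t Hn) as [m [_ Hm]]. eapply outn_red; eauto.
Qed.
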